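(* Let $L$ be a complete semilattice. Then $L$ is shrinkable if and only if for all $S,T\in\Sigma L$ such that the meet $\sigma_L(S)\wedge\sigma_L(T)$ exists in $L$, the meet $S\wedge T$ exists in $\Sigma L$ and $\sigma_L(S\wedge T)=\sigma_L(S)\wedge\sigma_L(T)$.
   Context: A complete semilattice is a poset in which every nonempty subset has a join (written $\sum$; a bottom element need not exist). For $x,x_i\in L$ write $x\le^*\sum_{i\in I}x_i$ if $x\le\sum_{i\in I_0}x_i$ for some finite nonempty $I_0\subseteq I$. $L$ is shrinkable if whenever $x\le\sum_{i\in I}x_i$ there is a family $(y_j)_{j\in J}$ in $L$ with $x=\sum_j y_j$ and $y_j\le^*\sum_{i\in I}x_i$ for every $j$. Suspension: on nonempty subsets of $L$ define the preorder $S\le T$ iff every $s\in S$ satisfies $s\le^*\sum T$ (i.e. $s$ is below the join of finitely many elements of $T$); $\Sigma L$ is the set of equivalence classes of nonempty subsets under the associated equivalence, with the induced partial order (joins in $\Sigma L$ are given by unions). $\sigma_L:\Sigma L\to L$ is $S\mapsto\sum S$. *)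

(* Defs.v *)
From Stdlib Require Import List.
Import ListNotations.

Section Defs.
Context {L : Type} (le : L -> L -> Prop).

Definition is_join (S : L -> Prop) (j : L) : Prop :=
  (forall s, S s -> le s j) /\ (forall u, (forall s, S s -> le s u) -> le j u).

Definition is_meet2 (a b m : L) : Prop :=
  le m a /\ le m b /\ (forall u, le u a -> le u b -> le u m).

Definition nonempty (S : L -> Prop) : Prop := exists x, S x.

Definition complete_semilattice : Prop :=
  (forall x, le x x) /\
  (forall x y, le x y -> le y x -> x = y) /\
  (forall x y z, le x y -> le y z -> le x z) /\
  (forall S : L -> Prop, nonempty S -> exists j, is_join S j).

Definition le_star_fam {I : Type} (x : L) (xs : I -> L) : Prop :=
  exists (I0 : list I) (j : L),
    I0 <> [] /\ is_join (fun y => exists i, In i I0 /\ y = xs i) j /\ le x j.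

Definition le_star_set (x : L) (T : L -> Prop) : Prop :=
  exists (T0 : list L) (j : L),
    T0 <> [] /\ (forall y, In y T0 -> T y) /\
    is_join (fun y => In y T0) j /\ le x j.

Definition range {I : Type} (xs : I -> L) : L -> Prop := fun y => exists i, xs i = y.

Definition shrinkable : Prop :=
  forall (I : Type) (xs : I -> L) (x s : L),
    inhabited I -> is_join (range xs) s -> le x s ->
    exists (J : Type) (ys : J -> L),
      inhabited J /\ is_join (range ys) x /\ (forall j, le_star_fam (ys j) xs).

Definition susp_le (S T : L -> Prop) : Prop :=
  forall s, S s -> le_star_set s T.

(* M represents the meet S /\ T in Sigma L (meets in the quotient poset of the
   preorder susp_le on nonempty subsets) *)
Definition susp_is_meet (S T M : L -> Prop) : Prop :=
  nonempty M /\ susp_le M S /\ susp_le M T /\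
  (forall U, nonempty U -> susp_le U S -> susp_le U T -> susp_le U M).

End Defs.

(* Main.v *)
Require Import Defs.
From Stdlib Require Import List.
Import ListNotations.

Section H.
Context {L : Type} (le : L -> L -> Prop).

Lemma is_join_ext (P Q : L -> Prop) j :
  (forall y, P y <-> Q y) -> is_join le P j -> is_join le Q j.
Proof.
  intros E [H1 H2]; split.
  - intros y Hy; apply H1, E, Hy.
  - intros u Hu; apply H2; intros y Hy; apply Hu, E, Hy.
Qed.

Lemma lift_list {I : Type} (xs : I -> L) (T0 : list L) :
  (forall y, In y T0 -> exists i, xs i = y) -> exists I0, map xs I0 = T0.
Proof.
  induction T0 as [|a T0 IH]; intros H.
  - exists []; reflexivity.
  - destruct (H a (or_introl eq_refl)) as [i Hi].
    destruct IH as [I0 HI0]. { intros y Hy; apply H; right; exact Hy. }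
    exists (i :: I0); simpl; rewrite Hi, HI0; reflexivity.
Qed.

Lemma fam_to_set (S : L -> Prop) y :
  le_star_fam le y (fun i : {x | S x} => proj1_sig i) -> le_star_set le y S.
Proof.
  intros [I0 [j [Hne [Hj Hle]]]].
  exists (map (fun i : {x | S x} => proj1_sig i) I0), j; split; [|split; [|split]].
  - destruct I0; [congruence | discriminate].
  - intros z Hz; apply in_map_iff in Hz; destruct Hz as [i [<- _]]; apply (proj2_sig i).
  - eapply is_join_ext; [|exact Hj]; intros z; rewrite in_map_iff; split.
    + intros [i [Hi ->]]; exists i; auto.
    + intros [i [<- Hi]]; exists i; auto.
  - exact Hle.
Qed.

Lemma star_trans (S : L -> Prop) y z :
  (forall x y z, le x y -> le y z -> le x z) ->
  le z y -> le_star_set le y S -> le_star_set le z S.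
Proof.
  intros Htr Hzy [T0 [j [A [B [C D]]]]].
  exists T0, j; split; [exact A|split; [exact B|split; [exact C|]]]. eapply Htr; eauto.
Qed.

Lemma star_le (S : L -> Prop) y s :
  (forall x y z, le x y -> le y z -> le x z) ->
  le_star_set le y S -> is_join le S s -> le y s.
Proof.
  intros Htr [T0 [j [A [B [C D]]]]] [E F].
  eapply Htr; [exact D|]. apply C. intros w Hw; apply E, B, Hw.
Qed.

End H.

Theorem mainTheorem3 (L : Type) (le : L -> L -> Prop)
  (HL : complete_semilattice le) :
  shrinkable le <->
  (forall (S T : L -> Prop) (s t m : L),
     nonempty S -> nonempty T ->
     is_join le S s -> is_join le T t -> is_meet2 le s t m ->
     exists M : L -> Prop, susp_is_meet le S T M /\ is_join le M m).
Proof.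
  destruct HL as [Hrefl [Hanti [Htr Hjoin]]].
  split.
  - intros Hsh S T s t m [s0 Hs0] [t0 Ht0] HS HT [Hms [Hmt Hm]].
    assert (JS : forall y, le y s -> exists (J : Type) (ys : J -> L),
      inhabited J /\ is_join le (range ys) y /\ (forall j, le_star_set le (ys j) S)).
    { intros y Hy.
      destruct (Hsh {x | S x} (fun i => proj1_sig i) y s) as [J [ys [A [B C]]]].
      - exact (inhabits (exist _ s0 Hs0)).
      - eapply is_join_ext; [|exact HS]; intros z; split.
        + intros Hz; exists (exist _ z Hz); reflexivity.
        + intros [i <-]; apply (proj2_sig i).
      - exact Hy.
      - exists J, ys; split; [exact A|split; [exact B|]]. intros j; apply fam_to_set, C. }
    assert (JT : forall y, le y t -> exists (J : Type) (ys : J -> L),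
      inhabited J /\ is_join le (range ys) y /\ (forall j, le_star_set le (ys j) T)).
    { intros y Hy.
      destruct (Hsh {x | T x} (fun i => proj1_sig i) y t) as [J [ys [A [B C]]]].
      - exact (inhabits (exist _ t0 Ht0)).
      - eapply is_join_ext; [|exact HT]; intros z; split.
        + intros Hz; exists (exist _ z Hz); reflexivity.
        + intros [i <-]; apply (proj2_sig i).
      - exact Hy.
      - exists J, ys; split; [exact A|split; [exact B|]]. intros j; apply fam_to_set, C. }
    exists (fun z => le_star_set le z S /\ le_star_set le z T).
    destruct (JS m Hms) as [J [ys [[j0] [[Hub Hleast] Hys]]]].
    assert (Hysm : forall j, le (ys j) m) by (intros j; apply Hub; exists j; reflexivity).
    assert (Hsub : forall j, exists (K : Type) (zs : K -> L),
      inhabited K /\ is_join le (range zs) (ys j) /\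
      (forall k, le_star_set le (zs k) S /\ le_star_set le (zs k) T)).
    { intros j. destruct (JT (ys j) (Htr _ _ _ (Hysm j) Hmt)) as [K [zs [A [B C]]]].
      exists K, zs; split; [exact A|split; [exact B|]]. intros k; split; [|apply C].
      apply (star_trans le S (ys j) (zs k) Htr); [|apply Hys]. apply (proj1 B). exists k; reflexivity. }
    split; [split; [|split; [|split]]|].
    + destruct (Hsub j0) as [K [zs [[k0] [_ C]]]]. exists (zs k0); apply C.
    + intros z [A _]; exact A.
    + intros z [_ B]; exact B.
    + intros U _ HUS HUT u Hu.
      exists [u], u; split; [discriminate|split; [|split; [split|apply Hrefl]]].
      * intros y0 [<-|[]]; split; auto.
      * intros y0 [<-|[]]; apply Hrefl.
      * intros w Hw; apply Hw; left; reflexivity.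
    + split.
      * intros z [A B]; apply Hm; [eapply star_le; [exact Htr|exact A|exact HS]|eapply star_le; [exact Htr|exact B|exact HT]].
      * intros u Hu. apply Hleast. intros y [j <-].
        destruct (Hsub j) as [K [zs [_ [[_ Hl] C]]]].
        apply Hl. intros w [k <-]. apply Hu, C.
  - intros H I xs x s [i0] Hs Hxs.
    destruct (H (range xs) (fun y => y = x) s x x) as [M [[[y0 Hy0] [HMS [_ _]]] HM]].
    + exists (xs i0), i0; reflexivity.
    + exists x; reflexivity.
    + exact Hs.
    + split; [intros y ->; apply Hrefl|]. intros u Hu; apply Hu; reflexivity.
    + split; [exact Hxs|split; [apply Hrefl|]]. intros u _ Hu; exact Hu.
    + exists {y | M y}, (fun j => proj1_sig j); split; [|split].
      * exact (inhabits (exist _ y0 Hy0)).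
      * eapply is_join_ext; [|exact HM]; intros z; split.
        -- intros Hz; exists (exist _ z Hz); reflexivity.
        -- intros [j <-]; apply (proj2_sig j).
      * intros j. destruct (HMS _ (proj2_sig j)) as [T0 [jj [A [B [C D]]]]].
        destruct (lift_list xs T0 B) as [I0 HI0].
        exists I0, jj; split; [|split].
        -- intros ->; subst T0; apply A; reflexivity.
        -- eapply is_join_ext; [|exact C]; intros z; rewrite <- HI0, in_map_iff; split.
           ++ intros [i [<- Hi]]; exists i; auto.
           ++ intros [i [Hi ->]]; exists i; auto.
        -- exact D.
Qed.
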